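(* Consider the parallel service system with $\lambda<\sum_{n=1}^N\mu_n$ under the softmax WSQ policy with sufficiently small temperature $\iota>0$. Then for every $w\in\mathbb{R}^N_{>0}$, the Markov chain of queue lengths induced by $\pi_w$ is irreducible, ergodic and positive Harris recurrent.
   Context: Parallel service system: $N$ parallel queues with state $x\in\mathbb{Z}^N_{\ge0}$ (queue lengths), Poisson arrivals at rate $\lambda>0$, exponential service rates $\mu_n>0$ at server $n$; an arriving job joins queue $a$ with probability $\pi_w(a\mid x)$. This gives a Markov chain with transitions $x\to x+e_a$ at rate $\lambda\pi_w(a\mid x)$ and $x\to x-e_n$ at rate $\mu_n\mathbb{I}_{\{x_n\ge1\}}$ (equivalently its embedded jump chain $x[k]$, the state after the $k$-th transition). Softmax WSQ policy with weights $w\in\mathbb{R}^N_{>0}$ and temperature $\iota>0$: $\pi_w(a\mid x)=\exp(-w_a(2x_a+1)/\iota)/\sum_{b=1}^N\exp(-w_b(2x_b+1)/\iota)$. *)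

(* Defs.v *)
From HB Require Import structures.
From mathcomp Require Import all_boot all_order all_algebra.
From mathcomp Require Import all_classical all_reals all_analysis.
Set Implicit Arguments. Unset Strict Implicit. Unset Printing Implicit Defensive.
Import Order.TTheory GRing.Theory Num.Theory.
Local Open Scope classical_set_scope.
Local Open Scope ring_scope.

(* P x y = one-step transition probability; succ x = a finite list containing
   every y with P x y <> 0 (used only to write the finite sums of the
   Chapman-Kolmogorov / first-passage recursions). *)
Section Chain.
Variables (R : realType) (S : countType).
Variables (P : S -> S -> R) (succ : S -> seq S).

Fixpoint nstep (n : nat) (x y : S) : R :=
  match n with
  | 0 => (x == y)%:R
  | n'.+1 => \sum_(z <- undup (succ x)) P x z * nstep n' z y
  end.

(* first-passage probability: P_x(tau_y = n), tau_y = inf {k >= 1 : X_k = y} *)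
Fixpoint fpass (n : nat) (x y : S) : R :=
  match n with
  | 0 => 0
  | n'.+1 => (n' == 0)%:R * P x y
             + \sum_(z <- undup (succ x) | z != y) P x z * fpass n' z y
  end.

Definition irreducible : Prop := forall x y : S, exists n, 0 < nstep n x y.

Definition hit_prob (x y : S) : \bar R := (\esum_(k in [set: nat]) (fpass k x y)%:E)%E.

Definition recurrent_state (x : S) : Prop := hit_prob x x = 1%E.

Definition positive_recurrent_state (x : S) : Prop :=
  recurrent_state x /\
  (\esum_(k in [set: nat]) ((k%:R * fpass k x x)%:E) < +oo)%E.

Definition ergodic : Prop := irreducible /\ forall x, positive_recurrent_state x.

Definition invariant_prob (pi : S -> R) : Prop :=
  (forall x, 0 <= pi x) /\
  (\esum_(x in [set: S]) (pi x)%:E = 1)%E /\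
  (forall y, \esum_(x in [set: S]) ((pi x * P x y)%:E) = (pi y)%:E)%E.

(* Harris recurrence w.r.t. the counting measure (the maximal irreducibility
   measure on a countable space): from every initial state every state is
   reached with probability one. *)
Definition harris_recurrent : Prop := forall x y : S, hit_prob x y = 1%E.

Definition positive_harris_recurrent : Prop :=
  harris_recurrent /\ exists pi : S -> R, invariant_prob pi.
End Chain.

Definition qstate (N : nat) := {ffun 'I_N -> nat}.

Definition incr N (x : qstate N) (a : 'I_N) : qstate N :=
  [ffun i => x i + (i == a)]%N.
Definition decr N (x : qstate N) (n : 'I_N) : qstate N :=
  [ffun i => x i - (i == n)]%N.

Definition qsucc N (x : qstate N) : seq (qstate N) :=
  [seq incr x a | a <- enum 'I_N] ++ [seq decr x n | n <- enum 'I_N].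

Section Queue.
Variables (R : realType) (N : nat) (lam : R) (mu : 'I_N -> R).

Definition softmax_wsq (w : 'I_N -> R) (iota : R) (x : qstate N) (a : 'I_N) : R :=
  expR (- (w a * (2 * (x a)%:R + 1)) / iota) /
  \sum_(b < N) expR (- (w b * (2 * (x b)%:R + 1)) / iota).

Definition qtotal_rate (x : qstate N) : R :=
  lam + \sum_(n < N) (0 < x n)%N%:R * mu n.

Definition qrate (w : 'I_N -> R) (iota : R) (x y : qstate N) : R :=
  \sum_(a < N) (y == incr x a)%:R * (lam * softmax_wsq w iota x a)
  + \sum_(n < N) ((0 < x n)%N && (y == decr x n))%:R * mu n.

Definition qjump (w : 'I_N -> R) (iota : R) (x y : qstate N) : R :=
  qrate w iota x y / qtotal_rate x.
End Queue.

(* Main.v *)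
Require Import Defs.
From HB Require Import structures.
From mathcomp Require Import all_boot all_order all_algebra.
From mathcomp Require Import all_classical all_reals all_analysis.
From mathcomp Require Import ring lra.
Import Order.TTheory GRing.Theory Num.Theory.
Local Open Scope classical_set_scope.
Local Open Scope ring_scope.
Set Implicit Arguments. Unset Strict Implicit. Unset Printing Implicit Defensive.

Section Gen.
Variables (R : realType) (S : countType) (P : S -> S -> R) (succ : S -> seq S).
Hypothesis P_ge0 : forall x z, 0 <= P x z.
Hypothesis P_out : forall x z, z \notin succ x -> P x z = 0.
Hypothesis P_sum : forall x, \sum_(z <- undup (succ x)) P x z = 1.

Definition Kop (y : S) (f : S -> R) (x : S) : R :=
  \sum_(z <- undup (succ x) | z != y) P x z * f z.
Fixpoint Kn y n f : S -> R :=
  match n with 0 => f | n'.+1 => Kop y (Kn y n' f) end.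
Definition surv y n := Kn y n (fun _ => 1).

Lemma Kop_ge0 y f : (forall z, 0 <= f z) -> forall x, 0 <= Kop y f x.
Proof. by move=> f0 x; apply: sumr_ge0 => z _; apply: mulr_ge0. Qed.

Lemma Kop_le y f g : (forall z, f z <= g z) -> forall x, Kop y f x <= Kop y g x.
Proof. by move=> fg x; apply: ler_sum => z _; apply: ler_wpM2l. Qed.

Lemma Kn_ge0 y n f : (forall z, 0 <= f z) -> forall x, 0 <= Kn y n f x.
Proof. by elim: n => [//|n IH] f0 x /=; apply: Kop_ge0 => z; apply: IH. Qed.

Lemma Kn_le y n f g : (forall z, f z <= g z) -> forall x, Kn y n f x <= Kn y n g x.
Proof. by elim: n => [//|n IH] fg x /=; apply: Kop_le => z; apply: IH. Qed.

Lemma KopD y a f g x :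
  Kop y (fun z => a * f z + g z) x = a * Kop y f x + Kop y g x.
Proof.
rewrite /Kop mulr_sumr -big_split /=; apply: eq_bigr => z _.
by rewrite mulrDr mulrCA.
Qed.

Lemma KopB y f g x : Kop y (fun z => f z - g z) x = Kop y f x - Kop y g x.
Proof.
rewrite /Kop -sumrB /=; apply: eq_bigr => z _; by rewrite mulrBr.
Qed.

Lemma Kop_sum y m (F : nat -> S -> R) x :
  Kop y (fun z => \sum_(k < m) F k z) x = \sum_(k < m) Kop y (F k) x.
Proof.
rewrite /Kop exchange_big /=; apply: eq_bigr => z _; by rewrite mulr_sumr.
Qed.

Lemma sum_neq_y x y : \sum_(z <- undup (succ x) | z != y) P x z + P x y = 1.
Proof.
rewrite -(P_sum x).
case: (boolP (y \in succ x)) => hy.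
  by rewrite [RHS](bigD1_seq y) ?undup_uniq ?mem_undup // addrC.
rewrite P_out // addr0 big_seq_cond [RHS]big_seq; apply: eq_bigl => z.
case: (boolP (z \in _)) => //= hz; apply/eqP => e.
by rewrite e mem_undup (negPf hy) in hz.
Qed.

Lemma Kop1_le y x : Kop y (fun _ => 1) x <= 1.
Proof.
have := sum_neq_y x y; have := P_ge0 x y.
move=> h1 h2; rewrite /Kop; under eq_bigr do rewrite mulr1; lra.
Qed.

Lemma surv_ge0 y n x : 0 <= surv y n x.
Proof. by apply: Kn_ge0. Qed.

Lemma surv_le1 y n x : surv y n x <= 1.
Proof.
elim: n x => [//|n IH] x /=.
by apply: le_trans (Kop1_le y x); apply: Kop_le.
Qed.

Lemma surv_decr y n x : surv y n.+1 x <= surv y n x.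
Proof.
elim: n x => [|n IH] x; first exact: surv_le1.
by rewrite /surv /=; apply: Kop_le => z; apply: IH.
Qed.

Lemma surv_mono y m n x : (m <= n)%N -> surv y n x <= surv y m x.
Proof.
move=> /subnKC <-; elim: (n - m)%N => [|k IH]; first by rewrite addn0.
by rewrite addnS; apply: le_trans (surv_decr _ _ _) IH.
Qed.

Lemma fpass0 x y : fpass P succ 0 x y = 0. Proof. by []. Qed.

Lemma fpass1 x y : fpass P succ 1 x y = P x y.
Proof. by rewrite /= mul1r big1 ?addr0 // => z _; rewrite mulr0. Qed.

Lemma fpassSS n x y :
  fpass P succ n.+2 x y = Kop y (fun z => fpass P succ n.+1 z y) x.
Proof. by rewrite [LHS]/= mul0r add0r. Qed.

Lemma fpass_surv n x y : fpass P succ n.+1 x y = surv y n x - surv y n.+1 x.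
Proof.
elim: n x => [|n IH] x.
  rewrite fpass1 /surv /= /Kop; under eq_bigr do rewrite mulr1.
  have := sum_neq_y x y; move=> h; lra.
rewrite fpassSS.
have -> : (fun z => fpass P succ n.+1 z y) = (fun z => surv y n z - surv y n.+1 z).
  by apply: funext => z; rewrite IH.
by rewrite KopB.
Qed.

Lemma fpass_ge0 n x y : 0 <= fpass P succ n x y.
Proof. by case: n => [|n] //; rewrite fpass_surv subr_ge0 surv_decr. Qed.

Lemma fpass_partial n x y : \sum_(k < n.+1) fpass P succ k x y = 1 - surv y n x.
Proof.
elim: n => [|n IH]; first by rewrite big_ord1 fpass0 /surv /= subrr.
rewrite big_ord_recr IH fpass_surv /=. lra.
Qed.

Lemma fpass_mean n x y :
  \sum_(k < n.+1) k%:R * fpass P succ k x y + n%:R * surv y n x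
  = \sum_(j < n) surv y j x.
Proof.
elim: n => [|n IH]; first by rewrite big_ord1 big_ord0 !mul0r addr0.
rewrite big_ord_recr [RHS]big_ord_recr -IH fpass_surv /=.
rewrite -!addrA; congr (_ + _).
rewrite mulrBr [_.+1%:R]mulrSr; lra.
Qed.

Lemma lyap_bound y g : (forall x, 0 <= g x) -> (forall x, Kop y g x <= g x - 1) ->
  forall n x, \sum_(k < n) surv y k x <= g x.
Proof.
move=> g0 hg; elim => [|n IH] x; first by rewrite big_ord0.
rewrite big_ord_recl.
have -> : \sum_(i < n) surv y (bump 0 i) x = Kop y (fun z => \sum_(k < n) surv y k z) x.
  by rewrite Kop_sum.
have := hg x; have := Kop_le y IH x; rewrite /surv /=; lra.
Qed.


Lemma surv_nbound y x G : (forall n, \sum_(k < n) surv y k x <= G) ->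
  forall n, n%:R * surv y n x <= G.
Proof.
move=> hG n; apply: le_trans (hG n).
have -> : n%:R * surv y n x = \sum_(k < n) surv y n x.
  by rewrite sumr_const card_ord mulr_natl.
by apply: ler_sum => k _; apply: surv_mono; apply: ltnW.
Qed.

Lemma hit_one y x G : (forall n, \sum_(k < n) surv y k x <= G) ->
  hit_prob P succ x y = 1%E.
Proof.
move=> hG; rewrite /hit_prob -nneseries_esumT; last by move=> n; rewrite lee_fin fpass_ge0.
set L := (\sum_(0 <= k <oo) _)%E.
have L0 : (0 <= L)%E by apply: nneseries_ge0 => n _ _; rewrite lee_fin fpass_ge0.
have L1 : (L <= 1)%E.
  apply: lime_le; first by apply: is_cvg_nneseries => n _ _; rewrite lee_fin fpass_ge0.
  apply: nearW => n; rewrite sumEFin lee_fin.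
  case: n => [|n]; first by rewrite big_geq.
  rewrite big_mkord fpass_partial; have := surv_ge0 y n x; lra.
have Lge n : ((1 - surv y n x)%:E <= L)%E.
  rewrite -fpass_partial -(big_mkord xpredT (fun k => fpass P succ k x y)) -sumEFin.
  by apply: nneseries_lim_ge => k _ _; rewrite lee_fin fpass_ge0.
have Lfin : L \is a fin_num by rewrite ge0_fin_numE // (le_lt_trans L1) // ltry.
rewrite -(fineK Lfin) in L1 Lge *; set l := fine L in L1 Lge *.
rewrite lee_fin in L1; congr (_%:E).
have {}Lge n : 1 - surv y n x <= l by rewrite -lee_fin.
apply/eqP; rewrite eq_le L1 /=; rewrite leNgt; apply/negP => hl.
have e0 : 0 < 1 - l by rewrite subr_gt0.
have G0 : 0 <= G by have := hG 0%N; rewrite big_ord0.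
have := archi_boundP (divr_ge0 G0 (ltW e0)).
set n := Num.bound _ => hn.
have h1 := surv_nbound hG n; have h2 := Lge n.
have : n%:R * (1 - l) <= G.
  apply: le_trans h1; apply: ler_wpM2l => //; lra.
rewrite -ler_pdivlMr //; lra.
Qed.

Lemma mean_fin x G : (forall n, \sum_(k < n) surv x k x <= G) ->
  (\esum_(k in [set: nat]) ((k%:R * fpass P succ k x x)%:E) < +oo)%E.
Proof.
move=> hG; rewrite -nneseries_esumT; last first.
  by move=> n; rewrite lee_fin mulr_ge0 // fpass_ge0.
apply: (@le_lt_trans _ _ G%:E); last exact: ltry.
apply: lime_le.
  by apply: is_cvg_nneseries => n _ _; rewrite lee_fin mulr_ge0 // fpass_ge0.
apply: nearW => n; rewrite sumEFin lee_fin.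
case: n => [|n]; first by rewrite big_geq //; have := hG 0%N; rewrite big_ord0.
rewrite big_mkord; apply: le_trans (hG n).
rewrite -fpass_mean lerDl; apply: mulr_ge0 => //; exact: surv_ge0.
Qed.


Lemma sum_seq_delta (s : seq S) (F : S -> R) u : uniq s ->
  \sum_(z <- s) (z == u)%:R * F z = (u \in s)%:R * F u.
Proof.
move=> us; case: (boolP (u \in s)) => hu.
  rewrite (bigD1_seq u) //= eqxx !mul1r big1 ?addr0 // => z /negPf ->.
  by rewrite mul0r.
rewrite big1_seq ?mul0r // => z [/andP [_ hz]]; case: eqP => [e|_]; last by rewrite mul0r.
by rewrite -e hz in hu.
Qed.

Definition delta (z : S) : S -> R := fun x => (x == z)%:R.

Lemma esumZl (T : choiceType) (I : set T) (a : T -> \bar R) (r : R) : 0 <= r ->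
  (forall i, 0 <= a i)%E ->
  (\esum_(i in I) (r%:E * a i) = r%:E * \esum_(i in I) a i)%E.
Proof.
move=> r0 a0; rewrite /esum -ereal_supZl //; last first.
  by apply/set0P; exists 0%E; exists set0 => //; [exact: fsets_set0 | rewrite fsbig_set0].
congr ereal_sup; rewrite image_comp; apply: eq_imagel => X [finX XI] /=.
by rewrite !fsbig_finite // ge0_sume_distrr.
Qed.

Lemma esum_swap (T1 T2 : choiceType) (a : T1 -> T2 -> \bar R) :
  (forall i j, 0 <= a i j)%E ->
  (\esum_(i in [set: T1]) \esum_(j in [set: T2]) a i j =
   \esum_(j in [set: T2]) \esum_(i in [set: T1]) a i j)%E.
Proof.
move=> a0; rewrite !esum_esum //.
rewrite (reindex_esum ([set: T2] `*`` (fun _ => [set: T1])) _ (fun x => (x.2, x.1))) //.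
split=> //=.
- by move=> [i1 i2] [j1 j2] /= _ _ [] -> ->.
- by move=> [i1 i2] _ /=; exists (i2, i1).
Qed.

Lemma Kn_lin y n h x : (forall z, 0 <= h z) ->
  (\esum_(z in [set: S]) ((Kn y n (delta z) x * h z)%:E) = (Kn y n h x)%:E)%E.
Proof.
move=> h0; elim: n x => [|n IH] x /=.
  transitivity (\esum_(z in [set x]) (h z)%:E)%E; last by rewrite esum_set1 // lee_fin.
  rewrite [RHS]esum_mkcond; apply: eq_esum => z _ /=; rewrite /delta.
  case: (eqVneq x z) => [<-|ne]; first by rewrite mem_set // mul1r.
  by rewrite memNset ?mul0r // => /= e; rewrite e eqxx in ne.
rewrite /Kop.
transitivity (\esum_(z in [set: S]) \sum_(u <- undup (succ x) | u != y)
   ((P x u)%:E * (Kn y n (delta z) u * h z)%:E))%E.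
  apply: eq_esum => z _; rewrite mulr_suml -sumEFin; apply: eq_bigr => u _.
  by rewrite -EFinM mulrA.
rewrite esum_sum; last first.
  by move=> z u _ _; apply: mule_ge0; rewrite lee_fin //; apply: mulr_ge0 => //; apply: Kn_ge0 => w; rewrite /delta.
rewrite -sumEFin; apply: eq_bigr => u _.
rewrite esumZl // ?IH -?EFinM // => z; rewrite lee_fin; apply: mulr_ge0 => //.
by apply: Kn_ge0 => w; rewrite /delta.
Qed.

Lemma KnS' y n f : Kn y n.+1 f = Kn y n (Kop y f).
Proof. by elim: n => [//|n IH] /=; rewrite -IH. Qed.

Lemma Kn0 y n : Kn y n (fun _ => 0) = (fun _ => 0).
Proof.
elim: n => [//|n IH] /=; rewrite IH; apply: funext => x.
by rewrite /Kop big1 // => z _; rewrite mulr0.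
Qed.

Lemma fpass_Kn n x y : fpass P succ n.+1 x y = Kn y n (fun z => P z y) x.
Proof.
elim: n x => [|n IH] x; first exact: fpass1.
rewrite fpassSS /=; congr Kop; apply: funext => z; exact: IH.
Qed.

Lemma esum_shift (a : nat -> \bar R) : (forall n, 0 <= a n)%E ->
  (\esum_(n in [set: nat]) a n = a 0%N + \esum_(n in [set: nat]) a n.+1)%E.
Proof.
move=> a0; rewrite -!nneseries_esumT //.
rewrite (nneseries_split 0 1) // add0n big_nat1; congr (_ + _)%E.
rewrite -nneseries_addn //; apply: congr_lim; apply: funext => n /=.
by apply: eq_bigr => i _; rewrite addn1.
Qed.

Lemma term_le_sum (s : seq S) (F : S -> R) z : uniq s -> z \in s ->
  (forall w, 0 <= F w) -> F z <= \sum_(w <- s) F w.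
Proof.
move=> us zs F0; rewrite (bigD1_seq z) //= lerDl.
by apply: sumr_ge0 => w _.
Qed.

Inductive reach : S -> S -> Prop :=
| reach0 x : reach x x
| reachS x z y : 0 < P x z -> reach z y -> reach x y.

Lemma reach_trans x z y : reach x z -> reach z y -> reach x y.
Proof.
elim=> [//|x1 z1 y1 h _ IH] hy; apply: reachS h _; exact: IH.
Qed.

Lemma in_succ x z : 0 < P x z -> z \in undup (succ x).
Proof.
move=> h; rewrite mem_undup; apply/negPn/negP => hn.
by rewrite P_out // ltxx in h.
Qed.

Lemma nstep_ge0 n x y : 0 <= nstep P succ n x y.
Proof.
elim: n x => [|n IH] x /=; first by case: (_ == _).
by apply: sumr_ge0 => z _; apply: mulr_ge0.
Qed.

Lemma reach_nstep x y : reach x y -> exists n, 0 < nstep P succ n x y.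
Proof.
elim=> [x1|x1 z y1 h _ [n hn]]; first by exists 0%N; rewrite /= eqxx.
exists n.+1 => /=.
have t := term_le_sum (F := fun w => P x1 w * nstep P succ n w y1) (undup_uniq (succ x1)) (in_succ h).
apply: lt_le_trans (t _); first exact: mulr_gt0.
by move=> w; apply: mulr_ge0 => //; apply: nstep_ge0.
Qed.

Lemma reach_surv x y : reach x y -> x != y -> exists n, surv y n x < 1.
Proof.
elim=> [x1|x1 z y1 h _ IH]; first by rewrite eqxx.
move=> _.
have hs := sum_neq_y x1 y1.
case: (eqVneq z y1) => [ezy|nzy].
  exists 1%N; rewrite /surv /= /Kop; under eq_bigr do rewrite mulr1.
  rewrite ezy in h; lra.
have [m hm] := IH nzy.
exists m.+1; rewrite /surv /= /Kop.
set L := undup (succ x1).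
have hz : P x1 z * (1 - surv y1 m z) <=
   \sum_(w <- L | w != y1) P x1 w * (1 - surv y1 m w).
  rewrite big_mkcond /=.
  have t := term_le_sum (F := fun w => if w != y1 then P x1 w * (1 - surv y1 m w) else 0) (undup_uniq (succ x1)) (in_succ h).
  apply: le_trans (t _); first by rewrite nzy.
  move=> w; case: (_ != _) => //; apply: mulr_ge0 => //.
  by rewrite subr_ge0 surv_le1.
have e : \sum_(w <- L | w != y1) P x1 w * (1 - surv y1 m w) =
  \sum_(w <- L | w != y1) P x1 w - \sum_(w <- L | w != y1) P x1 w * surv y1 m w.
  rewrite -sumrB; apply: eq_bigr => w _; by rewrite mulrBr mulr1.
rewrite e in hz.
have : 0 < P x1 z * (1 - surv y1 m z) by apply: mulr_gt0 => //; lra.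
have := P_ge0 x1 y1.
rewrite /surv in hz *; lra.
Qed.

Section Kac.
Variable y : S.
Definition tn n z := Kn y n (delta z) y.
Definition mmu z := (\esum_(n in [set: nat]) (tn n z)%:E)%E.

Lemma tn_ge0 n z : 0 <= tn n z.
Proof. by apply: Kn_ge0 => w; rewrite /delta. Qed.

Lemma mmu_le z : (mmu z <= \esum_(n in [set: nat]) (surv y n y)%:E)%E.
Proof.
apply: le_esum => n _; rewrite lee_fin; apply: Kn_le => w; rewrite /delta.
by case: (_ == _).
Qed.

Lemma mmu_ge0 z : (0 <= mmu z)%E.
Proof. by apply: esum_ge0 => n _; rewrite lee_fin tn_ge0. Qed.

Lemma mmu_tot :
  (\esum_(z in [set: S]) mmu z = \esum_(n in [set: nat]) (surv y n y)%:E)%E.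
Proof.
rewrite /mmu esum_swap; last by move=> z n; rewrite lee_fin tn_ge0.
apply: eq_esum => n _; rewrite -(Kn_lin y n (h := fun _ => 1)) //.
by apply: eq_esum => z _; rewrite mulr1.
Qed.

Lemma mmu_inv u : hit_prob P succ y y = 1%E ->
  (\esum_(z in [set: S]) (mmu z * (P z u)%:E) = mmu u)%E.
Proof.
move=> hy.
transitivity (\esum_(n in [set: nat]) (Kn y n (fun z => P z u) y)%:E)%E.
  transitivity (\esum_(z in [set: S]) \esum_(n in [set: nat]) (tn n z * P z u)%:E)%E.
    apply: eq_esum => z _; rewrite /mmu muleC -esumZl //; last by move=> n; rewrite lee_fin tn_ge0.
    by apply: eq_esum => n _; rewrite -EFinM mulrC.
  rewrite esum_swap; last by move=> z n; rewrite lee_fin mulr_ge0 // tn_ge0.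
  by apply: eq_esum => n _; apply: Kn_lin.
case: (eqVneq u y) => [->|uy].
  rewrite [RHS]/mmu [RHS]esum_shift; last by move=> n; rewrite lee_fin tn_ge0.
  rewrite [X in (_ = _ + X)%E]esum1 ?adde0; last first.
    move=> n _; rewrite /tn KnS'.
    have -> : Kop y (delta y) = (fun _ => 0).
      apply: funext => x; rewrite /Kop big1 // => z /negPf; rewrite /delta => ->.
      by rewrite mulr0.
    by rewrite Kn0.
  rewrite /tn /= /delta eqxx -hy /hit_prob esum_shift; last by move=> n; rewrite lee_fin fpass_ge0.
  rewrite fpass0 add0e; apply: eq_esum => n _; by rewrite fpass_Kn.
rewrite /mmu [RHS]esum_shift; last by move=> n; rewrite lee_fin tn_ge0.
have yu : (y == u) = false by rewrite eq_sym (negPf uy).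
rewrite /tn /= /delta yu add0e.
apply: eq_esum => n _; transitivity ((Kn y n.+1 (delta u) y)%:E)%E; last by [].
rewrite KnS'; congr (Kn y n _ y)%:E.
apply: funext => x; rewrite /Kop.
rewrite big_mkcond /= (eq_bigr (fun z => (z == u)%:R * P x z)); last first.
  move=> z _; rewrite /delta; case: (eqVneq z u) => [->|zu]; first by rewrite uy mul1r mulr1.
  by case: (_ != _); rewrite ?mulr0 ?mul0r.
rewrite sum_seq_delta ?undup_uniq // mem_undup.
by case: (boolP (u \in succ x)) => hu; rewrite ?mul1r // mul0r P_out.
Qed.

Lemma invariant_exists G : hit_prob P succ y y = 1%E ->
  (forall n, \sum_(k < n) surv y k y <= G) -> exists pi, invariant_prob P pi.
Proof.
move=> hy hG.
set Z := (\esum_(n in [set: nat]) (surv y n y)%:E)%E.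
have Z1 : (1 <= Z)%E.
  rewrite /Z -nneseries_esumT; last by move=> n; rewrite lee_fin surv_ge0.
  apply: le_trans (nneseries_lim_ge 1 _); last by move=> n _ _; rewrite lee_fin surv_ge0.
  by rewrite big_nat1.
have ZG : (Z <= G%:E)%E.
  rewrite /Z -nneseries_esumT; last by move=> n; rewrite lee_fin surv_ge0.
  apply: lime_le; first by apply: is_cvg_nneseries => n _ _; rewrite lee_fin surv_ge0.
  by apply: nearW => n; rewrite sumEFin lee_fin big_mkord.
have Zfin : Z \is a fin_num.
  by rewrite ge0_fin_numE ?(le_trans _ Z1) // (le_lt_trans ZG) // ltry.
have mfin z : mmu z \is a fin_num.
  by rewrite ge0_fin_numE ?mmu_ge0 // (le_lt_trans (mmu_le z)) // -/Z (le_lt_trans ZG) // ltry.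
set z := fine Z.
have z1 : 1 <= z by rewrite -lee_fin /z fineK.
have z0 : 0 < z by lra.
have hpi x : ((fine (mmu x) / z)%:E = (z^-1)%:E * mmu x)%E.
  by rewrite mulrC EFinM fineK.
exists (fun x => fine (mmu x) / z); split; [|split].
- by move=> x; apply: divr_ge0; [apply: fine_ge0; apply: mmu_ge0 | lra].
- under eq_esum do rewrite hpi.
  rewrite esumZl ?invr_ge0; [|lra|exact: mmu_ge0].
  by rewrite mmu_tot -/Z -(fineK Zfin) -EFinM mulVf // gt_eqF.
- move=> u; rewrite hpi.
  under eq_esum do rewrite EFinM hpi -muleA.
  rewrite esumZl ?invr_ge0; [|lra|]; last by move=> x; apply: mule_ge0; rewrite ?mmu_ge0 ?lee_fin.
  by rewrite mmu_inv.
Qed.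
End Kac.

Lemma chain_good (y0 : S) : (forall x y, reach x y) ->
  (forall y, exists g, (forall x, 0 <= g x) /\ forall x, Kop y g x <= g x - 1) ->
  [/\ irreducible P succ, ergodic P succ & positive_harris_recurrent P succ].
Proof.
move=> hr hl.
have hb y x : exists G, forall n, \sum_(k < n) surv y k x <= G.
  by have [g [g0 hg]] := hl y; exists (g x) => n; exact: (lyap_bound g0 hg n x).
have irr : irreducible P succ by move=> x y; apply: reach_nstep.
have hh x y : hit_prob P succ x y = 1%E by have [G hG] := hb y x; exact: hit_one hG.
split => //.
- split => // x; split; first exact: hh.
  by have [G hG] := hb x x; exact: mean_fin hG.
- split; first by move=> x y; apply: hh.
  by have [G hG] := hb y0 y0; exact: invariant_exists (hh y0 y0) hG.
Qed.

End Gen.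

Section Q.
Variables (R : realType) (N : nat) (lam : R) (mu : 'I_N -> R) (w : 'I_N -> R) (iota : R).
Hypotheses (lam0 : 0 < lam) (mu0 : forall n, 0 < mu n) (w0 : forall a, 0 < w a)
  (io0 : 0 < iota) (N0 : (0 < N)%N) (lamM : lam < \sum_n mu n).

Local Notation P := (qjump lam mu w iota).
Local Notation pol := (softmax_wsq w iota).
Local Notation Lam := (qtotal_rate lam mu).

Lemma tot_ge x : lam <= Lam x.
Proof.
rewrite /qtotal_rate lerDl; apply: sumr_ge0 => n _; apply: mulr_ge0 => //.
exact: ltW.
Qed.

Lemma tot_gt0 x : 0 < Lam x.
Proof. exact: lt_le_trans lam0 (tot_ge x). Qed.

Lemma tot_le x : Lam x <= lam + \sum_n mu n.
Proof.
rewrite /qtotal_rate lerD2l; apply: ler_sum => n _.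
case: (0 < x n)%N; rewrite ?mul1r ?mul0r //; exact: ltW.
Qed.

Definition Ex (x : qstate N) (b : 'I_N) := expR (- (w b * (2 * (x b)%:R + 1)) / iota).

Lemma Zx_gt0 x : 0 < \sum_b Ex x b.
Proof.
rewrite (bigD1 (Ordinal N0)) //=.
have h1 := expR_gt0 (- (w (Ordinal N0) * (2 * (x (Ordinal N0))%:R + 1)) / iota).
have h2 : 0 <= \sum_(b < N | b != Ordinal N0) Ex x b.
  by apply: sumr_ge0 => b _; apply: expR_ge0.
rewrite /Ex /= in h2 *; lra.
Qed.

Lemma pol_gt0 x a : 0 < pol x a.
Proof. by apply: divr_gt0; [apply: expR_gt0 | apply: Zx_gt0]. Qed.

Lemma pol_sum x : \sum_a pol x a = 1.
Proof.
rewrite /softmax_wsq -mulr_suml mulfV //; have := Zx_gt0 x; rewrite /Ex => h.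
by rewrite gt_eqF.
Qed.

Lemma incr_in (x : qstate N) a : incr x a \in qsucc x.
Proof. by rewrite mem_cat map_f ?mem_enum. Qed.

Lemma decr_in (x : qstate N) n : decr x n \in qsucc x.
Proof. by rewrite mem_cat orbC map_f ?mem_enum. Qed.

Lemma qexp x (f : qstate N -> R) :
  \sum_(z <- undup (qsucc x)) P x z * f z =
  (lam * \sum_a pol x a * f (incr x a) +
   \sum_n (0 < x n)%N%:R * mu n * f (decr x n)) / Lam x.
Proof.
rewrite /qjump; under eq_bigr do rewrite mulrAC; rewrite -mulr_suml; congr (_ / _).
rewrite /qrate; under eq_bigr do rewrite mulrDl !mulr_suml.
rewrite big_split /=; congr (_ + _).
  rewrite exchange_big /= mulr_sumr; apply: eq_bigr => a _.
  rewrite (eq_bigr (fun z => (z == incr x a)%:R * (lam * pol x a * f z))); last first.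
    by move=> z _; rewrite !mulrA.
  by rewrite sum_seq_delta ?undup_uniq // mem_undup incr_in mul1r mulrA.
rewrite exchange_big /=; apply: eq_bigr => n _.
case: (0 < x n)%N => /=; last first.
  by rewrite !mul0r big1 // => z _; rewrite !mul0r.
rewrite (eq_bigr (fun z => (z == decr x n)%:R * (mu n * f z))); last first.
  by move=> z _; rewrite mulrA.
by rewrite sum_seq_delta ?undup_uniq // mem_undup decr_in !mul1r.
Qed.

Lemma P_ge0 x z : 0 <= P x z.
Proof.
apply: divr_ge0; last exact: ltW (tot_gt0 x).
apply: addr_ge0; apply: sumr_ge0 => i _; apply: mulr_ge0 => //.
- by apply: mulr_ge0; [exact: ltW | exact: ltW (pol_gt0 x i)].
- exact: ltW.
Qed.

Lemma P_out x z : z \notin qsucc x -> P x z = 0.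
Proof.
move=> hz; rewrite /qjump /qrate big1 ?big1 ?addr0 ?mul0r //.
- move=> n _; case: eqP => [e|_]; last by rewrite andbF mul0r.
  by rewrite e decr_in in hz.
- move=> a _; case: eqP => [e|_]; last by rewrite mul0r.
  by rewrite e incr_in in hz.
Qed.

Lemma P_sum x : \sum_(z <- undup (qsucc x)) P x z = 1.
Proof.
have := qexp x (fun _ => 1); under eq_bigr do rewrite mulr1.
move=> ->; under eq_bigr do rewrite mulr1; rewrite pol_sum mulr1.
under eq_bigr do rewrite mulr1.
by rewrite mulfV // gt_eqF // tot_gt0.
Qed.


Lemma P_decr_gt0 (x : qstate N) n : (0 < x n)%N -> 0 < P x (decr x n).
Proof.
move=> hn; apply: divr_gt0; last exact: tot_gt0.
rewrite /qrate [X in _ + X](bigD1 n) //= hn eqxx mul1r.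
have h1 : 0 <= \sum_(i < N) (decr x n == incr x i)%:R * (lam * pol x i).
  apply: sumr_ge0 => i _; apply: mulr_ge0 => //; apply: mulr_ge0; [exact: ltW|exact: ltW (pol_gt0 _ _)].
have h2 : 0 <= \sum_(i < N | i != n) ((0 < x i)%N && (decr x n == decr x i))%:R * mu i.
  apply: sumr_ge0 => i _; apply: mulr_ge0 => //; exact: ltW.
have := mu0 n; lra.
Qed.

Lemma P_incr_gt0 (x : qstate N) a : 0 < P x (incr x a).
Proof.
apply: divr_gt0; last exact: tot_gt0.
rewrite /qrate (bigD1 a (P := predT)) //= eqxx mul1r.
have h1 : 0 <= \sum_(i < N | i != a) (incr x a == incr x i)%:R * (lam * pol x i).
  apply: sumr_ge0 => i _; apply: mulr_ge0 => //; apply: mulr_ge0; [exact: ltW|exact: ltW (pol_gt0 _ _)].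
have h2 : 0 <= \sum_(i < N) ((0 < x i)%N && (incr x a == decr x i))%:R * mu i.
  apply: sumr_ge0 => i _; apply: mulr_ge0 => //; exact: ltW.
have : 0 < lam * pol x a by apply: mulr_gt0 => //; exact: pol_gt0.
lra.
Qed.

Definition qzero : qstate N := [ffun _ => 0%N].

Lemma sum_decr (x : qstate N) n : (0 < x n)%N -> (\sum_i x i = (\sum_i decr x n i).+1)%N.
Proof.
move=> hn; rewrite (bigD1 n) // [X in _ = X.+1](bigD1 n) //= ffunE eqxx.
have -> : (\sum_(i | i != n) decr x n i = \sum_(i | i != n) x i)%N.
  by apply: eq_bigr => i /negPf hi; rewrite ffunE hi subn0.
by rewrite -addSn subn1 prednK.
Qed.

Lemma incr_decr (y : qstate N) n : (0 < y n)%N -> incr (decr y n) n = y.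
Proof.
move=> hn; apply/ffunP => i; rewrite !ffunE.
case: (eqVneq i n) => [->|_] /=; last by rewrite subn0 addn0.
by rewrite subnK.
Qed.

Lemma reach_zero k (x : qstate N) : (\sum_i x i)%N = k -> reach P x qzero.
Proof.
elim: k x => [|k IH] x hx.
  have -> : x = qzero; last exact: reach0.
  apply/ffunP => i; rewrite ffunE; apply/eqP.
  have : (x i <= \sum_j x j)%N by rewrite (bigD1 i) //= leq_addr.
  by rewrite hx leqn0.
case: (pickP (fun n => 0 < x n)%N) => [n hn | h0].
  apply: (reachS (z := decr x n)); first exact: P_decr_gt0.
  by apply: IH; have := sum_decr hn; rewrite hx; case.
rewrite big1 in hx => // i _.
by move: (h0 i) => /= /negbT; rewrite -leqNgt leqn0 => /eqP.
Qed.

Lemma reach_from_zero k (y : qstate N) : (\sum_i y i)%N = k -> reach P qzero y.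
Proof.
elim: k y => [|k IH] y hy.
  have -> : y = qzero; last exact: reach0.
  apply/ffunP => i; rewrite ffunE; apply/eqP.
  have : (y i <= \sum_j y j)%N by rewrite (bigD1 i) //= leq_addr.
  by rewrite hy leqn0.
case: (pickP (fun n => 0 < y n)%N) => [n hn | h0].
  have r1 : reach P qzero (decr y n).
    by apply: IH; have := sum_decr hn; rewrite hy; case.
  apply: reach_trans r1 _.
  apply: (reachS (z := incr (decr y n) n)); first exact: P_incr_gt0.
  rewrite incr_decr //; exact: reach0.
rewrite big1 in hy => // i _.
by move: (h0 i) => /= /negbT; rewrite -leqNgt leqn0 => /eqP.
Qed.

Lemma reach_all (x y : qstate N) : reach P x y.
Proof.
apply: reach_trans (reach_zero (erefl _)) (reach_from_zero (erefl _)).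
Qed.


Definition V (x : qstate N) : R := \sum_i w i * (x i)%:R ^+ 2.
Definition hh (x : qstate N) a := w a * (2 * (x a)%:R + 1).
Definition ee (x : qstate N) n := w n * (2 * (x n)%:R - 1).
Definition cc (x : qstate N) :=
  lam * \sum_a pol x a * hh x a - \sum_n (0 < x n)%N%:R * mu n * ee x n.

Lemma V_ge0 (x : qstate N) : 0 <= V x.
Proof. apply: sumr_ge0 => i _; apply: mulr_ge0; [exact: ltW|exact: sqr_ge0]. Qed.

Lemma V_incr (x : qstate N) a : V (incr x a) = V x + hh x a.
Proof.
rewrite /V (bigD1 a) // [in RHS](bigD1 a) //= ffunE eqxx addn1.
have -> : \sum_(i | i != a) w i * (incr x a i)%:R ^+ 2 =
          \sum_(i | i != a) w i * (x i)%:R ^+ 2.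
  by apply: eq_bigr => i /negPf hi; rewrite ffunE hi addn0.
rewrite /hh -natr1; ring.
Qed.

Lemma V_decr (x : qstate N) n : (0 < x n)%N -> V (decr x n) = V x - ee x n.
Proof.
move=> hn; rewrite /V (bigD1 n) // [in RHS](bigD1 n) //= ffunE eqxx /=.
have -> : \sum_(i | i != n) w i * (decr x n i)%:R ^+ 2 =
          \sum_(i | i != n) w i * (x i)%:R ^+ 2.
  by apply: eq_bigr => i /negPf hi; rewrite ffunE hi subn0.
rewrite /ee natrB //; ring.
Qed.

Lemma PV (x : qstate N) : \sum_(z <- undup (qsucc x)) P x z * V z = V x + cc x / Lam x.
Proof.
rewrite qexp.
have e1 : \sum_a pol x a * V (incr x a) = V x + \sum_a pol x a * hh x a.
  under eq_bigr do rewrite V_incr mulrDr.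
  by rewrite big_split /= -mulr_suml pol_sum mul1r.
have e2 : \sum_n (0 < x n)%N%:R * mu n * V (decr x n) =
   (\sum_n (0 < x n)%N%:R * mu n) * V x - \sum_n (0 < x n)%N%:R * mu n * ee x n.
  rewrite mulr_suml -sumrB; apply: eq_bigr => n _.
  case: (boolP (0 < x n)%N) => h; first by rewrite V_decr // mulrBr.
  by rewrite !mul0r subr0.
rewrite e1 e2 /cc.
have hL := tot_gt0 x; move: hL; rewrite /qtotal_rate => hL.
field; by rewrite gt_eqF.
Qed.

Lemma pol_term (x : qstate N) k a : pol x a * (hh x a - hh x k) <= iota.
Proof.
set u := hh x a - hh x k.
case: (lerP u 0) => hu.
  apply: le_trans (ltW io0); apply: mulr_ge0_le0 => //; exact: ltW (pol_gt0 _ _).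
have Zk : Ex x k <= \sum_b Ex x b.
  by rewrite (bigD1 k) //= lerDl; apply: sumr_ge0 => b _; apply: expR_ge0.
have Ea : Ex x a = Ex x k * (expR (u / iota))^-1.
  rewrite -expRN -expRD /Ex; congr expR; rewrite /u /hh; field; by rewrite gt_eqF.
have hp : pol x a <= Ex x a / Ex x k.
  rewrite /softmax_wsq -/(Ex x a); apply: ler_wpM2l; first exact: expR_ge0.
  have := Zx_gt0 x; rewrite /Ex => hz.
  by rewrite lef_pV2 ?posrE ?expR_gt0.
have hE : Ex x a / Ex x k = (expR (u / iota))^-1.
  by rewrite Ea mulrC mulrA mulVf ?mul1r // gt_eqF // expR_gt0.
rewrite hE in hp.
apply: le_trans (ler_wpM2r (ltW hu) hp) _.
have ht := expR_ge1Dx (u / iota).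
have hx : 0 < expR (u / iota) by apply: expR_gt0.
rewrite mulrC ler_pdivrMr //.
have : u = iota * (u / iota) by field; rewrite gt_eqF.
move=> {1}->; apply: ler_wpM2l; [exact: ltW|lra].
Qed.

Lemma pol_bound (x : qstate N) k : \sum_a pol x a * hh x a <= hh x k + N%:R * iota.
Proof.
have e : \sum_a pol x a * hh x a =
   hh x k + \sum_a pol x a * (hh x a - hh x k).
  under [in RHS]eq_bigr do rewrite mulrBr.
  by rewrite sumrB -mulr_suml pol_sum mul1r addrC subrK.
rewrite e lerD2l.
apply: le_trans (ler_sum _ (fun a _ => pol_term x k a)) _.
by rewrite sumr_const card_ord mulr_natl.
Qed.


Definition MM := \sum_n mu n.
Definition rho := lam / MM.
Definition A0 := lam * N%:R * iota + \sum_k mu k * w k * (rho + 1).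
Definition kap := 2 * (1 - rho).

Lemma MM_gt0 : 0 < MM.
Proof. exact: lt_trans lamM. Qed.

Lemma rho_ge0 : 0 <= rho.
Proof. apply: divr_ge0; [exact: ltW | exact: ltW MM_gt0]. Qed.

Lemma kap_gt0 : 0 < kap.
Proof.
rewrite /kap /rho; have h := MM_gt0.
have : lam / MM < 1 by rewrite ltr_pdivrMr // mul1r.
lra.
Qed.

Lemma A0_ge0 : 0 <= A0.
Proof.
apply: addr_ge0.
  by apply: mulr_ge0; [apply: mulr_ge0; [exact: ltW|] | exact: ltW].
apply: sumr_ge0 => k _; apply: mulr_ge0.
  by apply: mulr_ge0; exact: ltW.
have := rho_ge0; lra.
Qed.

Lemma cc_bound (x : qstate N) :
  cc x <= A0 - kap * \sum_k mu k * w k * (x k)%:R.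
Proof.
have s1 : lam * \sum_a pol x a * hh x a <=
     rho * \sum_k mu k * hh x k + lam * N%:R * iota.
  have h : MM * \sum_a pol x a * hh x a <= \sum_k mu k * hh x k + MM * (N%:R * iota).
    rewrite /MM mulr_suml mulr_suml -big_split /=; apply: ler_sum => k _.
    rewrite -mulrDr; apply: ler_wpM2l; [exact: ltW | exact: pol_bound].
  have hM := MM_gt0.
  rewrite /rho.
  have -> : lam * \sum_a pol x a * hh x a = lam / MM * (MM * \sum_a pol x a * hh x a).
    by field; rewrite gt_eqF.
  have -> : lam * N%:R * iota = lam / MM * (MM * (N%:R * iota)).
    by field; rewrite gt_eqF.
  rewrite -mulrDr; apply: ler_wpM2l => //; apply: divr_ge0; exact: ltW.
have s2 : \sum_n mu n * ee x n <= \sum_n (0 < x n)%N%:R * mu n * ee x n.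
  apply: ler_sum => n _; case: (boolP (0 < x n)%N) => h; first by rewrite mul1r.
  move: h; rewrite -leqNgt leqn0 => /eqP h; rewrite /ee h mul0r.
  have := mu0 n; have := w0 n; move=> a b; nra.
have e : rho * \sum_k mu k * hh x k - \sum_n mu n * ee x n =
    \sum_k mu k * w k * (rho + 1) - kap * \sum_k mu k * w k * (x k)%:R.
  rewrite mulr_sumr mulr_sumr -!sumrB; apply: eq_bigr => k _.
  rewrite /hh /ee /kap; ring.
rewrite /cc /A0; lra.
Qed.

Definition Lmax := lam + MM.
Definition DD := A0 / lam.
Definition KK := Num.bound (\sum_k (A0 + Lmax) / (kap * (mu k * w k))).

Lemma DD_ge0 : 0 <= DD.
Proof. apply: divr_ge0; [exact: A0_ge0 | exact: ltW]. Qed.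

Lemma drift_le (x : qstate N) : cc x / Lam x <= DD.
Proof.
have hL := tot_gt0 x; have hl := tot_ge x.
rewrite ler_pdivrMr //.
have h1 : cc x <= A0.
  apply: le_trans (cc_bound x) _; rewrite gerBl; apply: mulr_ge0; first exact: ltW kap_gt0.
  apply: sumr_ge0 => k _; apply: mulr_ge0 => //; apply: mulr_ge0; exact: ltW.
apply: le_trans h1 _.
have -> : A0 = DD * lam by rewrite /DD; field; rewrite gt_eqF.
apply: ler_wpM2l => //; exact: DD_ge0.
Qed.

Lemma drift_out (x : qstate N) k : (KK < x k)%N -> cc x / Lam x <= -1.
Proof.
move=> hk.
have hL := tot_gt0 x; have hl := tot_le x.
rewrite ler_pdivrMr // mulN1r.
have hmw : 0 < mu k * w k by apply: mulr_gt0.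
have hkap := kap_gt0.
have hK : (A0 + Lmax) / (kap * (mu k * w k)) <= KK%:R.
  have hj j : 0 <= (A0 + Lmax) / (kap * (mu j * w j)).
    apply: divr_ge0.
      apply: addr_ge0; first exact: A0_ge0.
      by apply: addr_ge0; [exact: ltW | exact: ltW MM_gt0].
    by apply: mulr_ge0; [exact: ltW|apply: mulr_ge0; exact: ltW].
  have hs0 : 0 <= \sum_j (A0 + Lmax) / (kap * (mu j * w j)).
    by apply: sumr_ge0 => j _; apply: hj.
  apply: le_trans (ltW (archi_boundP hs0)).
  by rewrite (bigD1 k) //= lerDl; apply: sumr_ge0 => j _; apply: hj.
rewrite ler_pdivrMr in hK; last exact: mulr_gt0.
have hxk : (KK%:R : R) <= (x k)%:R by rewrite ler_nat ltnW.
have hS : mu k * w k * (x k)%:R <= \sum_j mu j * w j * (x j)%:R.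
  rewrite (bigD1 k) //= lerDl; apply: sumr_ge0 => j _; apply: mulr_ge0 => //.
  by apply: mulr_ge0; exact: ltW.
have h1 := cc_bound x.
have h2 : kap * (mu k * w k) * KK%:R <= kap * \sum_j mu j * w j * (x j)%:R.
  rewrite -mulrA; apply: ler_wpM2l; first exact: ltW.
  apply: le_trans hS; apply: ler_wpM2l => //; exact: ltW.
rewrite /Lmax /MM in hK; lra.
Qed.


Section Lyap.
Variable y : qstate N.
Local Notation sv := (surv P (@qsucc N) y).
Local Notation Kp := (Kop P (@qsucc N) y).

Definition emb (f : {ffun 'I_N -> 'I_KK.+1}) : qstate N := [ffun i => nat_of_ord (f i)].

Lemma exf (f : {ffun 'I_N -> 'I_KK.+1}) : exists n, (emb f != y) ==> (sv n (emb f) < 1).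
Proof.
case: (eqVneq (emb f) y) => [e|ne]; first by exists 0%N.
have [n hn] := reach_surv P_ge0 P_out P_sum (reach_all (emb f) y) ne.
by exists n.
Qed.

Definition mm := (\max_(f : {ffun 'I_N -> 'I_KK.+1}) xchoose (exf f))%N.

Lemma sv_m_lt f : emb f != y -> sv mm (emb f) < 1.
Proof.
move=> hf; have := xchooseP (exf f); move=> /implyP /(_ hf) h.
apply: le_lt_trans h; apply: (surv_mono P_ge0 P_out P_sum).
rewrite /mm; exact: leq_bigmax.
Qed.

Definition BB := (1 + DD) * \sum_(f : {ffun 'I_N -> 'I_KK.+1} | emb f != y) (1 - sv mm (emb f))^-1.
Definition phi x := \sum_(k < mm) sv k x.
Definition g0 x := BB * phi x + V x.
Definition CC := Kp g0 y + 1.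
Definition gg x := g0 x + (x == y)%:R * CC.

Lemma BB_ge0 : 0 <= BB.
Proof.
apply: mulr_ge0; first by have := DD_ge0; lra.
apply: sumr_ge0 => f hf; rewrite invr_ge0; have := sv_m_lt hf; lra.
Qed.

Lemma phi_ge0 x : 0 <= phi x.
Proof. apply: sumr_ge0 => k _; exact: (surv_ge0 (@qsucc N) P_ge0). Qed.

Lemma g0_ge0 x : 0 <= g0 x.
Proof. apply: addr_ge0; [apply: mulr_ge0; [exact: BB_ge0|exact: phi_ge0]|exact: V_ge0]. Qed.

Lemma CC_ge0 : 0 <= CC.
Proof. have := Kop_ge0 (@qsucc N) P_ge0 y g0_ge0 y; rewrite /CC; lra. Qed.

Lemma gg_ge0 x : 0 <= gg x.
Proof.
apply: addr_ge0; first exact: g0_ge0.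
apply: mulr_ge0; [by case: (_ == _)|exact: CC_ge0].
Qed.

Lemma Kp_phi x : Kp phi x = phi x - 1 + sv mm x.
Proof.
rewrite /phi Kop_sum.
have e : \sum_(k < mm.+1) sv k x = 1 + \sum_(k < mm) Kp (sv k) x.
  by rewrite big_ord_recl.
have e2 : \sum_(k < mm.+1) sv k x = \sum_(k < mm) sv k x + sv mm x.
  by rewrite big_ord_recr.
lra.
Qed.

Lemma Kp_V x : Kp V x <= V x + cc x / Lam x.
Proof.
rewrite -PV /Kop big_mkcond /=; apply: ler_sum => z _.
case: (_ != _) => //; apply: mulr_ge0; [exact: P_ge0 | exact: V_ge0].
Qed.

Lemma gg_drift x : Kp gg x <= gg x - 1.
Proof.
have e0 : Kp gg x = Kp g0 x.
  by rewrite /Kop; apply: eq_bigr => z hz; rewrite /gg (negPf hz) mul0r addr0.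
rewrite e0 /gg; case: (eqVneq x y) => [->|ne].
  by rewrite mul1r /CC; have := g0_ge0 y; lra.
rewrite mul0r addr0.
have e1 : Kp g0 x = BB * Kp phi x + Kp V x by rewrite /g0 KopD.
rewrite e1 Kp_phi.
have hV := Kp_V x.
have hB := BB_ge0.
have hs1 := surv_le1 P_ge0 P_out P_sum y mm x.
case: (boolP [forall k, x k <= KK]%N) => hbox.
  have hd := drift_le x.
  pose fx : {ffun 'I_N -> 'I_KK.+1} := [ffun i => inord (x i)].
  have hfx : emb fx = x.
    apply/ffunP => i; rewrite !ffunE inordK //; rewrite ltnS.
    by move/forallP: hbox => /(_ i).
  have hne : emb fx != y by rewrite hfx.
  have hlt := sv_m_lt hne; rewrite hfx in hlt.
  set t := (1 - sv mm x)^-1.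
  have ht : t * (1 - sv mm x) = 1 by rewrite /t mulVf // subr_eq0 eq_sym lt_eqF.
  have hS : t <= \sum_(f | emb f != y) (1 - sv mm (emb f))^-1.
    rewrite (bigD1 fx) //= hfx lerDl; apply: sumr_ge0 => f /andP [hf _].
    by rewrite invr_ge0; have := sv_m_lt hf; lra.
  have hBB : 1 + DD <= BB * (1 - sv mm x).
    rewrite /BB -mulrA; rewrite -[X in X <= _]mulr1; apply: ler_wpM2l.
      by have := DD_ge0; lra.
    have h3 : t * (1 - sv mm x) <= (\sum_(f | emb f != y) (1 - sv mm (emb f))^-1) * (1 - sv mm x).
      by apply: ler_wpM2r => //; lra.
    by rewrite ht in h3.
  rewrite /g0; lra.
move/forallPn: hbox => [k]; rewrite -ltnNge => hk.
have hd := drift_out hk.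
have : BB * (sv mm x - 1) <= 0 by apply: mulr_ge0_le0 => //; lra.
rewrite /g0; lra.
Qed.

End Lyap.

End Q.

Local Close Scope classical_set_scope.

Theorem mainTheorem3 (R : realType) (N : nat) (lam : R) (mu : 'I_N -> R) :
  0 < lam -> (forall n, 0 < mu n) -> lam < \sum_(n < N) mu n ->
  forall w : 'I_N -> R, (forall a, 0 < w a) ->
  exists iota0 : R, 0 < iota0 /\
    forall iota : R, 0 < iota -> iota < iota0 ->
      [/\ irreducible (qjump lam mu w iota) (@qsucc N),
          ergodic (qjump lam mu w iota) (@qsucc N)
        & positive_harris_recurrent (qjump lam mu w iota) (@qsucc N)].
Proof.
move=> lam0 mu0 lamM w w0; exists 1; split => // iota io0 _.
have N0 : (0 < N)%N.
  case: (posnP N) => [eN|//].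
  have : \sum_(n < N) mu n = 0.
    by apply: big1 => i _; have := ltn_ord i; move: (nat_of_ord i) => k; rewrite eN.
  move=> h; rewrite h in lamM; lra.
have := @chain_good R _ (qjump lam mu w iota) (@qsucc N) (P_ge0 w iota lam0 mu0 N0) (@P_out _ _ lam mu w iota)
   (P_sum w iota lam0 mu0 N0) (qzero N).
move=> H; apply: H.
- exact: (reach_all w iota lam0 mu0 N0).
- move=> y; eexists; split.
  + exact: (gg_ge0 lam0 mu0 w0 io0 N0 lamM y).
  + exact: (gg_drift lam0 mu0 w0 io0 N0 lamM y).
Qed.
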